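(* Let $U=U_1\times\cdots\times U_m$ with $U_i\subseteq\mathbb{R}^p$ be convex, $C\subseteq\mathbb{R}^{mp}$, $\overline{U}=U\cap C$, with $0\in\overline{U}$. Let $b\in\mathbb{R}^m$, let $f_1:\mathbb{R}^{n_1}\to\mathbb{R}$, $f_2:\mathbb{R}^{n_2}\to\mathbb{R}$ be convex with $f_1(0)=f_2(0)=0$, and for each $i\in[m]$ let $g_i(x,y,u_i)$ be concave in $(x,y)$ and convex in $u_i$, with $g_i(0,0,u_i)\ge0$ for all $u\in\overline{U}$ and $g_i(x,y,0)\le0$ for all feasible $x,y$. For a set $S$ define $$z^{\rm ad}(S)=\sup_{x,\ y:S\to\mathbb{R}^{n_2}}\Big\{f_1(x)+\inf_{u\in S}f_2(y(u)):\ g_i(x,y(u),u_i)\le b_i\ \forall u\in S,\ \forall i\Big\},$$ $$z^{\rm st}(S)=\sup_{x,y}\{f_1(x)+f_2(y):\ g_i(x,y,u_i)\le b_i\ \forall u\in S,\ \forall i\},$$ and $z_{\rm aro}=z^{\rm ad}(U)$, $z_{\rm acp}=z^{\rm ad}(\overline{U})$, $z_{\rm ro}=z^{\rm st}(U)$, $z_{\rm cp}=z^{\rm st}(\overline{U})$. Let $\gamma_{\rm ro}=\gamma(U,\Pi(\overline{U}))$ and $\gamma_{\rm aro}=\gamma(U,\overline{U})$. If $z_{\rm acp}>0$ and $z_{\rm ro}<\infty$, then $$\frac{z_{\rm cp}}{z_{\rm ro}}\ge\frac{1}{\gamma_{\rm ro}},\qquad\frac{z_{\rm acp}}{z_{\rm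 aro}}\ge\frac{1}{\gamma_{\rm aro}}.$$ Furthermore, the bounds are tight.
   Context: $u=(u_1,\dots,u_m)$ with $u_i\in\mathbb{R}^p$; $\Pi_i(S)$ is the projection of $S$ onto the $i$-th block, $\Pi(S)=\Pi_1(S)\times\cdots\times\Pi_m(S)$. For $r\ge0$, $rS=\{rx:x\in S\}$; $\gamma(S_1,S_2)=\min\{\gamma\ge0:S_2\subseteq\gamma S_1\}$. *)

(* Defs.v *)
From HB Require Import structures.
From mathcomp Require Import all_boot all_order all_algebra.
From mathcomp Require Import all_classical all_reals.
From mathcomp Require Import ereal.
Set Implicit Arguments. Unset Strict Implicit. Unset Printing Implicit Defensive.
Import Order.TTheory GRing.Theory Num.Theory.
Local Open Scope classical_set_scope.
Local Open Scope ring_scope.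

Section Defs.
Variable R : realType.

Definition convex_set (V : lmodType R) (S : set V) : Prop :=
  forall x y (t : R), S x -> S y -> 0 <= t <= 1 -> S (t *: x + (1 - t) *: y).

Definition convex_fun (V : lmodType R) (f : V -> R) : Prop :=
  forall x y (t : R), 0 <= t <= 1 ->
    f (t *: x + (1 - t) *: y) <= t * f x + (1 - t) * f y.

Definition concave_fun2 (X Y : lmodType R) (h : X -> Y -> R) : Prop :=
  forall x1 x2 y1 y2 (t : R), 0 <= t <= 1 ->
    t * h x1 y1 + (1 - t) * h x2 y2 <= h (t *: x1 + (1 - t) *: x2) (t *: y1 + (1 - t) *: y2).

Variables (m p n1 n2 : nat).
(* A point u of R^{mp} is an m x p matrix; its i-th block u_i is row i u. *)
Notation uT := 'M[R]_(m, p).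

Definition scale_set (V : lmodType R) (r : R) (S : set V) : set V := [set r *: x | x in S].

Definition proj_i (i : 'I_m) (S : set uT) : set 'rV[R]_p := [set row i u | u in S].
Definition proj_all (S : set uT) : set uT := [set u | forall i, proj_i i S (row i u)].

Definition gammaS (S1 S2 : set uT) : \bar R :=
  ereal_inf [set r%:E | r in [set r : R | 0 <= r /\ S2 `<=` scale_set r S1]].

Definition prod_set (Ui : 'I_m -> set 'rV[R]_p) : set uT :=
  [set u | forall i, Ui i (row i u)].

Variables (b : 'I_m -> R) (f1 : 'rV[R]_n1 -> R) (f2 : 'rV[R]_n2 -> R)
  (g : 'I_m -> 'rV[R]_n1 -> 'rV[R]_n2 -> 'rV[R]_p -> R).

Definition z_ad (S : set uT) : \bar R :=
  ereal_sup [set z | exists (x : 'rV[R]_n1) (y : uT -> 'rV[R]_n2),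
     (forall u, S u -> forall i, g i x (y u) (row i u) <= b i) /\
     z = ((f1 x)%:E + ereal_inf [set (f2 (y u))%:E | u in S])%E].

Definition z_st (S : set uT) : \bar R :=
  ereal_sup [set z | exists (x : 'rV[R]_n1) (y : 'rV[R]_n2),
     (forall u, S u -> forall i, g i x y (row i u) <= b i) /\
     z = (f1 x + f2 y)%:E].

End Defs.

Definition setting (R : realType) (m p n1 n2 : nat) (Ui : 'I_m -> set 'rV[R]_p)
  (C : set 'M[R]_(m, p)) (b : 'I_m -> R) (f1 : 'rV[R]_n1 -> R) (f2 : 'rV[R]_n2 -> R)
  (g : 'I_m -> 'rV[R]_n1 -> 'rV[R]_n2 -> 'rV[R]_p -> R) : Prop :=
  let U := prod_set Ui in
  let Ubar := U `&` C in
  (forall i, convex_set (Ui i)) /\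
  Ubar 0 /\
  (convex_fun f1 /\ convex_fun f2) /\
  (f1 0 = 0 /\ f2 0 = 0) /\
  (forall i u, concave_fun2 (fun x y => g i x y u)) /\
  (forall i x y, convex_fun (g i x y)) /\
  (forall i u, Ubar u -> 0 <= g i 0 0 (row i u)) /\
  (forall i x y, g i x y 0 <= 0).

(* Main.v *)
Require Import Defs.
From HB Require Import structures.
From mathcomp Require Import all_boot all_order all_algebra.
From mathcomp Require Import all_classical all_reals.
From mathcomp Require Import ereal.
From mathcomp Require Import ring lra.
Import Order.TTheory GRing.Theory Num.Theory.
Local Open Scope classical_set_scope.
Local Open Scope ring_scope.

Section Abs.
Variable R : realType.
Local Open Scope ereal_scope.

Lemma Gam_bounds (T : set R) : (forall r, T r -> (0 <= r)%R) -> T 1%R ->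
  0 <= ereal_inf [set r%:E | r in T] <= 1.
Proof.
move=> H0 H1; apply/andP; split.
  by apply: le_ereal_inf_tmp => _ [r Tr <-]; rewrite lee_fin H0.
by apply: ereal_inf_lbound; exists 1%R.
Qed.

Lemma abs_le0 (A B : \bar R) (T : set R) : (forall r, T r -> (0 <= r)%R) -> T 1%R ->
  A <= 0 -> A <= B -> A * (ereal_inf [set r%:E | r in T])^-1 <= B.
Proof.
move=> H0 H1 A0 AB; have /andP[G0 G1] := Gam_bounds _ H0 H1.
apply: le_trans AB; apply: lee_nemulr => //.
by rewrite inve_ge1.
Qed.

Lemma abs_key (A B : \bar R) (T : set R) : (forall r, T r -> (0 <= r)%R) -> T 1%R ->
  (T 0%R -> forall r, (0 < r)%R -> T r) ->
  (forall r, T r -> (0 < r)%R -> A <= B * r%:E) -> 0 < B ->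
  A * (ereal_inf [set r%:E | r in T])^-1 <= B.
Proof.
move=> H0 H1 Hz Hsc B0; have /andP[G0 G1] := Gam_bounds _ H0 H1.
have [A0|A0] := leP A 0.
  apply: le_trans (ltW B0); apply: mule_le0_ge0 => //; by rewrite inve_ge0.
case: B B0 Hsc => [c||] //; last by rewrite leey.
rewrite lte_fin => c0 Hsc.
case: A A0 Hsc => [s||] // A0 Hsc; last first.
  by have := Hsc 1%R H1 ltr01; rewrite mule1 leye_eq.
rewrite lte_fin in A0.
have HT : forall r, T r -> (s / c <= r)%R.
  move=> r Tr; have := H0 r Tr; rewrite le_eqVlt => /orP[/eqP r0|rp].
    subst r; have hp : (0 < s / (2 * c))%R by rewrite divr_gt0 // mulr_gt0.
    have := Hsc _ (Hz Tr _ hp) hp; rewrite -EFinM lee_fin.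
    have -> : (c * (s / (2 * c)) = s / 2)%R by field; rewrite gt_eqF.
    lra.
  have := Hsc r Tr rp; rewrite -EFinM lee_fin => h.
  by rewrite ler_pdivrMr // mulrC.
have : ((s / c)%:E <= ereal_inf [set r%:E | r in T]).
  by apply: le_ereal_inf_tmp => _ [r Tr <-]; rewrite lee_fin HT.
case: (ereal_inf _) G0 G1 => [g||] //= _ g1; rewrite lee_fin => hg.
have gp : (0 < g)%R by apply: lt_le_trans hg; rewrite divr_gt0.
rewrite inver gt_eqF // -EFinM lee_fin.
rewrite ler_pdivrMr // in hg.
by rewrite ler_pdivrMr // mulrC.
Qed.
End Abs.


Section Main.
Variable R : realType.
Variables (m p n1 n2 : nat) (Ui : 'I_m -> set 'rV[R]_p)
  (C : set 'M[R]_(m, p)) (b : 'I_m -> R) (f1 : 'rV[R]_n1 -> R) (f2 : 'rV[R]_n2 -> R)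
  (g : 'I_m -> 'rV[R]_n1 -> 'rV[R]_n2 -> 'rV[R]_p -> R).
Hypothesis H : setting Ui C b f1 f2 g.

Lemma conv_scale (V : lmodType R) (f : V -> R) (x : V) (r : R) :
  convex_fun f -> f 0 = 0 -> 0 < r <= 1 -> f x <= r * f (r^-1 *: x).
Proof.
move=> cf f0 /andP[r0 r1].
have := cf (r^-1 *: x) 0 r; rewrite r1 ltW //= => /(_ isT).
rewrite scalerA mulfV ?gt_eqF // scale1r scaler0 addr0 f0 mulr0 addr0.
by [].
Qed.

Lemma pw (r : R) (x : 'rV_n1) (y : 'rV_n2) (u w : 'M_(m, p)) :
  0 < r <= 1 -> (prod_set Ui `&` C) u -> u = r *: w ->
  (forall i, g i x y (row i w) <= b i) ->
  forall i, g i (r^-1 *: x) (r^-1 *: y) (row i u) <= b i.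
Proof.
move: H; rewrite /setting /= => -[cvU [Ub0 [[cf1 cf2] [[f10 f20] [cg [cgu [g00 gx0]]]]]]].
move=> /andP[r0 r1] Uu uw hw i.
have rowu : row i u = r *: row i w + (1 - r) *: 0.
  by rewrite scaler0 addr0 uw; apply/rowP => j; rewrite !mxE.
have r01 : 0 <= r <= 1 by rewrite r1 ltW.
have h1 := cgu i (r^-1 *: x) (r^-1 *: y) (row i w) 0 r r01.
have h2 := cg i (row i w) (r^-1 *: x) 0 (r^-1 *: y) 0 r r01.
have h3 := cgu i 0 0 (row i w) 0 r r01.
rewrite -rowu in h1 h3.
rewrite /= !scalerA mulfV ?gt_eqF // !scale1r !scaler0 !addr0 in h2.
have h4 := g00 i u Uu.
have h5 := gx0 i (r^-1 *: x) (r^-1 *: y).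
have h6 := gx0 i 0 0.
have h7 := hw i.
set a := g i _ _ (row i u) in h1 *.
set c := g i (r^-1 *: x) (r^-1 *: y) (row i w) in h1 h2.
set d := g i 0 0 (row i w) in h2 h3.
set z := g i (r^-1 *: x) (r^-1 *: y) 0 in h1 h5.
set e := g i 0 0 (row i u) in h3 h4.
set z0 := g i 0 0 0 in h3 h6.
have q1 : (1 - r) * z <= 0 by rewrite mulr_ge0_le0 // subr_ge0.
have q2 : (1 - r) * z0 <= 0 by rewrite mulr_ge0_le0 // subr_ge0.
have q3 : 0 <= r * d by lra.
have q4 : 0 <= d by rewrite -(pmulr_rge0 _ r0).
have q5 : 0 <= (1 - r) * d by rewrite mulr_ge0 // subr_ge0.
lra.
Qed.


Let U := prod_set Ui.
Let Ubar := U `&` C.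

Lemma st_scale (r : R) : 0 < r <= 1 -> Ubar `<=` scale_set r U ->
  (z_st b f1 f2 g U <= z_st b f1 f2 g Ubar * r%:E)%E.
Proof.
move=> r01 sub; have cf := H; move: cf; rewrite /setting /= =>
  -[cvU [Ub0 [[cf1 cf2] [[f10 f20] [cg [cgu [g00 gx0]]]]]]].
apply: ge_ereal_sup => _ [x [y [feas ->]]].
have feas' : forall u, Ubar u -> forall i,
    g i (r^-1 *: x) (r^-1 *: y) (row i u) <= b i.
  move=> u Uu; have [w Uw e] := sub u Uu.
  exact: (@pw r _ _ u w r01 Uu (esym e) (feas w Uw)).
apply: (@le_trans _ _ ((f1 (r^-1 *: x) + f2 (r^-1 *: y))%:E * r%:E)%E).
  rewrite -EFinM lee_fin.
  have := @conv_scale _ _ x r cf1 f10 r01; have := @conv_scale _ _ y r cf2 f20 r01; nra.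
apply: lee_wpmul2r; first by rewrite lee_fin; case/andP: r01 => /ltW.
by apply: ereal_sup_ubound; exists (r^-1 *: x), (r^-1 *: y); split.
Qed.

Lemma ad_scale (r : R) : 0 < r <= 1 -> Ubar `<=` scale_set r U ->
  (z_ad b f1 f2 g U <= z_ad b f1 f2 g Ubar * r%:E)%E.
Proof.
move=> r01 sub; have cf := H; move: cf; rewrite /setting /= =>
  -[cvU [Ub0 [[cf1 cf2] [[f10 f20] [cg [cgu [g00 gx0]]]]]]].
have r0 : 0 < r by case/andP: r01.
have winU : forall u, Ubar u -> U (r^-1 *: u) /\ u = r *: (r^-1 *: u).
  move=> u Uu; have [w Uw e] := sub u Uu.
  split; last by rewrite scalerA mulfV ?gt_eqF // scale1r.
  by rewrite -e scalerA mulVf ?gt_eqF // scale1r.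
apply: ge_ereal_sup => _ [x [y [feas ->]]].
set Y := fun u => r^-1 *: y (r^-1 *: u).
have feas' : forall u, Ubar u -> forall i,
    g i (r^-1 *: x) (Y u) (row i u) <= b i.
  move=> u Uu; have [Uw e] := winU u Uu.
  exact: (@pw r _ _ u _ r01 Uu e (feas _ Uw)).
set I := ereal_inf _.
set I' := ereal_inf [set (f2 (Y u))%:E | u in Ubar].
have hI : (I * (r^-1)%:E <= I')%E.
  apply: le_ereal_inf_tmp => _ [u Uu <-].
  have [Uw _] := winU u Uu.
  have h1 : (I <= (f2 (y (r^-1 *: u)))%:E)%E by apply: ereal_inf_lbound; exists (r^-1 *: u).
  apply: (@le_trans _ _ ((f2 (y (r^-1 *: u)))%:E * (r^-1)%:E)%E).
    by apply: lee_wpmul2r => //; rewrite lee_fin invr_ge0 ltW.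
  rewrite -EFinM lee_fin.
  have := @conv_scale _ _ (y (r^-1 *: u)) r cf2 f20 r01; rewrite -/(Y u) => h.
  by rewrite ler_pdivrMr // mulrC.
have hI2 : (I <= I' * r%:E)%E.
  apply: (@le_trans _ _ (I * (r^-1)%:E * r%:E)%E).
    by rewrite -muleA -EFinM mulVf ?gt_eqF // mule1.
  by apply: lee_wpmul2r => //; rewrite lee_fin ltW.
apply: (@le_trans _ _ (((f1 (r^-1 *: x))%:E + I') * r%:E)%E).
  rewrite muleDl // ?fin_num_adde_defr // -EFinM.
  apply: leeD => //; rewrite lee_fin.
  by have := @conv_scale _ _ x r cf1 f10 r01; rewrite mulrC.
apply: lee_wpmul2r; first by rewrite lee_fin ltW.
by apply: ereal_sup_ubound; exists (r^-1 *: x), Y; split.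
Qed.

Lemma T_props (S : set 'M[R]_(m, p)) : S `<=` U -> U 0 ->
  let T := [set r : R | 0 <= r /\ S `<=` scale_set r U] in
  (forall r, T r -> 0 <= r) /\ T 1 /\ (T 0 -> forall r, 0 < r -> T r).
Proof.
move=> SU U0 /=; split; first by move=> r [].
split.
  split => // u Su; exists u; first exact: SU.
  by rewrite scale1r.
move=> [_ S0] r r0; split; first exact: ltW.
move=> u Su; have [w _ e] := S0 u Su; exists 0 => //.
by rewrite -e scale0r scaler0.
Qed.

Lemma bounds_main :
   let z_aro := z_ad b f1 f2 g U in
   let z_acp := z_ad b f1 f2 g Ubar in
   let z_ro := z_st b f1 f2 g U in
   let z_cp := z_st b f1 f2 g Ubar in
   let gamma_ro := gammaS U (proj_all Ubar) in
   let gamma_aro := gammaS U Ubar in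
   (0 < z_acp)%E ->
   (z_ro * gamma_ro^-1 <= z_cp)%E /\ (z_aro * gamma_aro^-1 <= z_acp)%E.
Proof.
move=> z_aro z_acp z_ro z_cp gamma_ro gamma_aro acp0.
have cf := H; move: cf; rewrite /setting /= =>
  -[cvU [Ub0 [[cf1 cf2] [[f10 f20] [cg [cgu [g00 gx0]]]]]]].
have U0 : U 0 by case: Ub0.
have UbU : Ubar `<=` U by move=> u [].
have UbP : Ubar `<=` proj_all Ubar by move=> u Uu i; exists u.
have PU : proj_all Ubar `<=` U.
  by move=> u Pu i; have [v [Uv _] <-] := Pu i; exact: Uv.
have Hsc : forall (S : set 'M[R]_(m, p)) (zA zB : \bar R),
    Ubar `<=` S -> (0 <= zB)%E ->
    (forall r, 0 < r <= 1 -> Ubar `<=` scale_set r U -> (zA <= zB * r%:E)%E) ->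
    forall r, (0 <= r /\ S `<=` scale_set r U) -> 0 < r -> (zA <= zB * r%:E)%E.
  move=> S zA zB US zB0 hs r [_ Sr] r0.
  have [r1|r1] := leP r 1.
    by apply: hs; [rewrite r0 r1 | exact: subset_trans Sr].
  apply: (@le_trans _ _ (zB * 1%:E)%E).
    apply: hs; first by rewrite ltr01 lexx.
    by move=> u /UbU Uu; exists u => //; rewrite scale1r.
  by apply: lee_wpmul2l => //; rewrite lee_fin ltW.
split.
  have [T0 [T1 Tz]] := T_props _ PU U0.
  have [ro0|ro0] := leP z_ro 0%E.
    apply: abs_le0 => //.
    apply: ereal_sup_le => _ [x [y [feas ->]]]; exists x, y; split => //.
    by move=> u /UbU; exact: feas.
  have cp0 : (0 < z_cp)%E.
    apply: lt_le_trans ro0 _.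
    apply: ereal_sup_le => _ [x [y [feas ->]]]; exists x, y; split => //.
    by move=> u /UbU; exact: feas.
  apply: abs_key => //.
  apply: (Hsc _ _ _ UbP (ltW cp0)) => r r01 sub.
  exact: st_scale.
have [T0 [T1 Tz]] := T_props _ UbU U0.
apply: abs_key => //.
apply: (Hsc _ _ _ (fun u h => h) (ltW acp0)) => r r01 sub.
exact: ad_scale.
Qed.

End Main.

Section Tight.
Variable R : realType.
Variable gam : R.
Hypothesis gam01 : 0 < gam <= 1.

Notation Ui := (fun (_ : 'I_1) => [set v : 'rV[R]_1 | 0 <= v 0 0 <= 1]).
Notation C := [set u : 'M[R]_(1, 1) | u 0 0 <= gam].
Notation tb := (fun (_ : 'I_1) => (1 : R)).
Notation tf1 := (fun (x : 'rV[R]_1) => x 0 0).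
Notation tf2 := (fun (_ : 'rV[R]_1) => (0 : R)).
Notation tg := (fun (_ : 'I_1) (x : 'rV[R]_1) (_ : 'rV[R]_1) (u : 'rV[R]_1) => x 0 0 * u 0 0).

Lemma t_setting : setting Ui C tb tf1 tf2 tg.
Proof.
have [g0 g1] := andP gam01.
split.
  move=> i x y t /andP[x0 x1] /andP[y0 y1] /andP[t0 t1] /=; rewrite !mxE.
  apply/andP; split; nra.
split.
  by split; [move=> i /=; rewrite !mxE lexx ler01 | rewrite /= mxE ltW].
split.
  split=> x y t /andP[t0 t1]; rewrite ?mxE //.
  by rewrite !mulr0 addr0.
split.
  by rewrite mxE.
split.
  move=> i u x1 x2 y1 y2 t /andP[t0 t1] /=; rewrite !mxE; nra.
split.
  move=> i x y u1 u2 t /andP[t0 t1] /=; rewrite !mxE; nra.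
split.
  by move=> i u _ /=; rewrite !mxE mul0r.
by move=> i x y /=; rewrite !mxE mulr0.
Qed.

Lemma inf0 (S : set 'M[R]_(1, 1)) (y : 'M[R]_(1, 1) -> 'rV[R]_1) : S 0 ->
  ereal_inf [set (tf2 (y u))%:E | u in S] = 0%E.
Proof.
move=> S0; apply/le_anti/andP; split.
  by apply: ereal_inf_lbound; exists 0.
by apply: le_ereal_inf_tmp => _ [u _ <-].
Qed.

Lemma vals (S : set 'M[R]_(1, 1)) (c : R) : 0 < c ->
  (forall u, S u -> 0 <= u 0 0 <= c) -> S (const_mx c) -> S 0 ->
  z_st tb tf1 tf2 tg S = (c^-1)%:E /\ z_ad tb tf1 tf2 tg S = (c^-1)%:E.
Proof.
move=> c0 hS Sc S0.
have ub : forall x : 'rV[R]_1, (forall u, S u -> tg 0 x x (row 0 u) <= tb 0) ->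
    x 0 0 <= c^-1.
  move=> x /(_ _ Sc) /=; rewrite !mxE => h.
  by rewrite -[c^-1]mul1r ler_pdivlMr.
have feas : forall u, S u -> forall i : 'I_1,
    tg i (const_mx c^-1) (0 : 'rV[R]_1) (row i u) <= tb i.
  move=> u /hS /andP[u0 u1] i /=; rewrite (ord1 i) !mxE.
  by rewrite mulrC ler_pdivrMr // mul1r.
split; apply/le_anti/andP; split.
- apply: ge_ereal_sup => _ [x [y [fe ->]]].
  rewrite lee_fin addr0; apply: ub => u Su; have := fe u Su 0; rewrite /= !mxE //.
- apply: ereal_sup_ubound; exists (const_mx c^-1), 0; split => //.
  by rewrite mxE addr0.
- apply: ge_ereal_sup => _ [x [y [fe ->]]].
  rewrite inf0 // adde0 lee_fin; apply: ub => u Su; have := fe u Su 0; rewrite /= !mxE //.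
- apply: ereal_sup_ubound; exists (const_mx c^-1), (fun _ => 0); split => //.
  by rewrite inf0 // adde0 mxE.
Qed.

Lemma gam_val (S : set 'M[R]_(1, 1)) :
  (prod_set Ui `&` C) `<=` S -> (forall u, S u -> 0 <= u 0 0 <= gam) ->
  gammaS (prod_set Ui) S = gam%:E.
Proof.
have [g0 g1] := andP gam01.
move=> sub hS.
have Sc : S (const_mx gam).
  apply: sub; split; last by rewrite /= mxE.
  by move=> i /=; rewrite !mxE ltW.
apply/le_anti/andP; split.
  apply: ereal_inf_lbound; exists gam => //; split; first exact: ltW.
  move=> u Su; exists (gam^-1 *: u).
    move=> i /=; rewrite (ord1 i) !mxE.
    have /andP[u0 u1] := hS u Su.
    apply/andP; split; first by rewrite mulr_ge0 // invr_ge0 ltW.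
    by rewrite mulrC ler_pdivrMr // mul1r.
  by rewrite scalerA mulfV ?gt_eqF // scale1r.
apply: le_ereal_inf_tmp => _ [r [r0 hr] <-]; rewrite lee_fin.
have [w Uw e] := hr _ Sc.
have := Uw 0; rewrite /= !mxE => /andP[w0 w1].
have : (r *: w) 0 0 = (const_mx gam : 'M[R]_(1,1)) 0 0 by rewrite e.
rewrite !mxE => <-; nra.
Qed.

End Tight.

Theorem theorem12 (R : realType) :
  (* the bounds *)
  (forall (m p n1 n2 : nat) (Ui : 'I_m -> set 'rV[R]_p) (C : set 'M[R]_(m, p))
     (b : 'I_m -> R) (f1 : 'rV[R]_n1 -> R) (f2 : 'rV[R]_n2 -> R)
     (g : 'I_m -> 'rV[R]_n1 -> 'rV[R]_n2 -> 'rV[R]_p -> R),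
   setting Ui C b f1 f2 g ->
   let U := prod_set Ui in
   let Ubar := U `&` C in
   let z_aro := z_ad b f1 f2 g U in
   let z_acp := z_ad b f1 f2 g Ubar in
   let z_ro := z_st b f1 f2 g U in
   let z_cp := z_st b f1 f2 g Ubar in
   let gamma_ro := gammaS U (proj_all Ubar) in
   let gamma_aro := gammaS U Ubar in
   (0 < z_acp)%E -> (z_ro < +oo)%E ->
   (z_ro * gamma_ro^-1 <= z_cp)%E /\ (z_aro * gamma_aro^-1 <= z_acp)%E) /\
  (* tightness: for every admissible value gamma in (0,1], an instance attains equality *)
  (forall gam : R, 0 < gam <= 1 ->
   exists (m p n1 n2 : nat) (Ui : 'I_m -> set 'rV[R]_p) (C : set 'M[R]_(m, p))
     (b : 'I_m -> R) (f1 : 'rV[R]_n1 -> R) (f2 : 'rV[R]_n2 -> R)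
     (g : 'I_m -> 'rV[R]_n1 -> 'rV[R]_n2 -> 'rV[R]_p -> R),
   setting Ui C b f1 f2 g /\
   let U := prod_set Ui in
   let Ubar := U `&` C in
   let z_aro := z_ad b f1 f2 g U in
   let z_acp := z_ad b f1 f2 g Ubar in
   let z_ro := z_st b f1 f2 g U in
   let z_cp := z_st b f1 f2 g Ubar in
   let gamma_ro := gammaS U (proj_all Ubar) in
   let gamma_aro := gammaS U Ubar in
   (0 < z_acp)%E /\ (z_ro < +oo)%E /\
   gamma_ro = gam%:E /\ gamma_aro = gam%:E /\
   (z_ro \is a fin_num) /\ (z_aro \is a fin_num) /\
   z_cp = (z_ro * gamma_ro^-1)%E /\
   z_acp = (z_aro * gamma_aro^-1)%E).
Proof.
split.
  move=> m p n1 n2 Ui C b f1 f2 g H U Ubar z_aro z_acp z_ro z_cp gro garo acp0 _.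
  exact: (@bounds_main R m p n1 n2 Ui C b f1 f2 g H acp0).
move=> gam g01.
have [gp g1] := andP g01.
exists 1%N, 1%N, 1%N, 1%N, (fun (_ : 'I_1) => [set v : 'rV[R]_1 | 0 <= v 0 0 <= 1]),
  [set u : 'M[R]_(1, 1) | u 0 0 <= gam], (fun (_ : 'I_1) => (1 : R)),
  (fun (x : 'rV[R]_1) => x 0 0), (fun (_ : 'rV[R]_1) => (0 : R)),
  (fun (_ : 'I_1) (x : 'rV[R]_1) (_ : 'rV[R]_1) (u : 'rV[R]_1) => x 0 0 * u 0 0).
split; first exact: (@t_setting R gam g01).
move=> U Ubar z_aro z_acp z_ro z_cp gro garo.
have U0 : U 0 by move=> i /=; rewrite !mxE lexx ler01.
have Ubar0 : Ubar 0 by split => //=; rewrite mxE ltW.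
have hU : forall u, U u -> 0 <= u 0 0 <= 1.
  by move=> u /(_ 0) /=; rewrite !mxE.
have hUb : forall u, Ubar u -> 0 <= u 0 0 <= gam.
  move=> u [/hU /andP[u0 _] /= Cu]; by rewrite u0.
have Uc : U (const_mx 1) by move=> i /=; rewrite !mxE lexx ler01.
have Ubc : Ubar (const_mx gam).
  by split; [move=> i /=; rewrite !mxE ltW | rewrite /= mxE].
have [ro aro] := @vals R U 1 ltr01 hU Uc U0.
have [cp acp] := @vals R Ubar gam gp hUb Ubc Ubar0.
have ega : garo = gam%:E := @gam_val R gam g01 Ubar (fun u h => h) hUb.
have egr : gro = gam%:E.
  apply: (@gam_val R gam g01 (proj_all Ubar)).
    by move=> u Uu i; exists u.
  move=> u Pu; have [v Uv e] := Pu 0.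
  have := hUb v Uv.
  have := congr1 (fun M : 'rV[R]_1 => M 0 0) e; rewrite /= !mxE => ->.
  by [].
rewrite invr1 in ro aro.
have e1 : z_acp = (gam^-1)%:E := acp.
have e2 : z_aro = 1%:E := aro.
have e3 : z_ro = 1%:E := ro.
have e4 : z_cp = (gam^-1)%:E := cp.
rewrite e1 e2 e3 e4 egr ega.
rewrite inver gt_eqF // mul1e.
split; first by rewrite lte_fin invr_gt0.
split; first by rewrite ltey.
by [].
Qed.
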